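(* Let $R\colon \mathbf{EA}\to[\mathbf{FinBool}^{op},\mathbf{Set}]$ and $L\colon[\mathbf{FinBool}^{op},\mathbf{Set}]\to\mathbf{EA}$ be the functors defined below, with $L$ left adjoint to $R$. The adjunction $L\dashv R$ is a reflection. More precisely, for every effect algebra $A$, the cocone under the diagram $D_A\colon \int R(A)\to\mathbf{EA}$ whose component at an object $(2^{[n]},g)$ is the morphism $g\colon 2^{[n]}\to A$ itself is a colimiting cocone. Consequently $L(R(A))\cong A$, naturally in $A$, i.e. the counit of the adjunction is an isomorphism.
   Context: An effect algebra is a partial algebra $(A;+,0,1)$, with a binary partial operation $+$ and constants $0,1$, satisfying: (E1) if $a+b$ is defined, then $b+a$ is defined and $a+b=b+a$; (E2) if $a+b$ and $(a+b)+c$ are defined, then $b+c$ and $a+(b+c)$ are defined and $(a+b)+c=a+(b+c)$; (E3) for every $a$ there is a unique $a^\perp$ such that $a+a^\perp=1$; (E4) if $a+1$ is defined, then $a=0$. One-element effect algebras (with $0=1$) are allowed. We write $a\perp b$ when $a+b$ is defined. A morphism of effect algebras $f\colon A_1\to A_2$ is a map with $f(1)=1$ such that $a\perp b$ implies $f(a)\perp f(b)$ and $f(a+b)=f(a)+f(b)$. $\mathbf{EA}$ denotes the category of effect algebras. Every Boolean algebra is an effect algebra: $x\perp y$ iff $x\wedge y=0$, and then $x+y=x\vee y$. This makes $\mathbf{Bool}$ a full subcategory of $\mathbf{EA}$. An observable is an $\mathbf{EA}$-morphism from a Boolean algebra into an effect algebra. For $n\in\mathbb N$ let $[n]=\{1,\dots,n\}$,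 with $[0]=\emptyset$. $\mathbf{FinBool}$ is the full subcategory of $\mathbf{Bool}$ on the objects $2^{[n]}$ (power-set Boolean algebras), $n\in\mathbb N$. $E\colon\mathbf{FinBool}\to\mathbf{EA}$ is the resulting fully faithful inclusion. $R(A)$ is the presheaf $R(A)(2^{[n]})=\mathbf{EA}(E(2^{[n]}),A)$, with $R(A)(f)(g)=g\circ E(f)$. For a presheaf $P$ on $\mathbf{FinBool}$, the category of elements $\int P$ has: - objects: pairs $(2^{[n]},g)$ with $g\in P(2^{[n]})$; - arrows $(2^{[n]},g)\to(2^{[n']},g')$: Boolean algebra morphisms $f\colon 2^{[n]}\to 2^{[n']}$ with $P(f)(g')=g$. For $P=R(A)$, this last condition reads $g'\circ f=g$. $\pi_P\colon\int P\to\mathbf{FinBool}$ is the projection. $L(P)=\varinjlim(E\circ\pi_P)$. $D_A$ denotes $E\circ\pi_{R(A)}\colon\int R(A)\to\mathbf{EA}$. *)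

(* Defs.v *)
From mathcomp Require Import all_boot.
Set Implicit Arguments. Unset Strict Implicit. Unset Printing Implicit Defensive.

(* A partial algebra (A; +, 0, 1); the partial operation + is modelled by
   an option-valued function: a + b is defined iff ea_plus a b = Some _. *)
Record eaStruct := EAStruct {
  ea_car :> Type;
  ea_plus : ea_car -> ea_car -> option ea_car;
  ea_zero : ea_car;
  ea_one : ea_car }.

Definition is_effect_algebra (A : eaStruct) : Prop :=
  (forall a b c : A, ea_plus a b = Some c -> ea_plus b a = Some c) /\
  (forall a b c ab abc : A, ea_plus a b = Some ab ->
              ea_plus ab c = Some abc ->
              exists bc, ea_plus b c = Some bc /\ ea_plus a bc = Some abc) /\
  (forall a : A, exists! b : A, ea_plus a b = Some (ea_one A)) /\
  (forall a c : A, ea_plus a (ea_one A) = Some c -> a = ea_zero A).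

Definition is_ea_hom (A B : eaStruct) (f : A -> B) : Prop :=
  f (ea_one A) = ea_one B /\
  (forall a b c : A, ea_plus a b = Some c -> ea_plus (f a) (f b) = Some (f c)).

Record ea_hom (A B : eaStruct) := EAHom {
  hom_fun :> A -> B;
  hom_prop : is_ea_hom hom_fun }.

(* The power-set Boolean algebra 2^[n] (subsets of 'I_n ~ [n]) viewed as an
   effect algebra: x ⊥ y iff x ∧ y = 0, and then x + y = x ∨ y. *)
Definition boolEA (n : nat) : eaStruct :=
  @EAStruct {set 'I_n}
    (fun x y => if [disjoint x & y] then Some (x :|: y) else None)
    set0 [set: 'I_n].

Definition is_bool_hom (n m : nat) (f : {set 'I_n} -> {set 'I_m}) : Prop :=
  f set0 = set0 /\ f [set: 'I_n] = [set: 'I_m] /\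
  (forall x y, f (x :|: y) = f x :|: f y) /\
  (forall x y, f (x :&: y) = f x :&: f y) /\
  (forall x, f (~: x) = ~: f x).

(* A cocone under D_A : ∫R(A) -> EA with vertex B: a component
   h (2^[n], g) : 2^[n] -> B for each object (2^[n], g) of ∫R(A), natural
   w.r.t. the arrows f : (2^[n], g) -> (2^[m], g') (Boolean morphisms with
   g' ∘ f = g). *)
Definition is_cocone (A B : eaStruct)
    (h : forall n : nat, ea_hom (boolEA n) A -> ea_hom (boolEA n) B) : Prop :=
  forall (n m : nat) (g : ea_hom (boolEA n) A) (g' : ea_hom (boolEA m) A)
         (f : {set 'I_n} -> {set 'I_m}),
    is_bool_hom f -> (forall x, g' (f x) = g x) ->
    forall x, h m g' (f x) = h n g x.

(* Main.v *)
Require Import Defs.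
From mathcomp Require Import all_boot.
From Stdlib Require Import ClassicalEpsilon.
Set Implicit Arguments. Unset Strict Implicit.

Lemma E1 (A : eaStruct) (HA : is_effect_algebra A) (a b c : A) :
  ea_plus a b = Some c -> ea_plus b a = Some c.
Proof. by case: HA => H _; apply: H. Qed.

Lemma one_zero (A : eaStruct) (HA : is_effect_algebra A) :
  ea_plus (ea_one A) (ea_zero A) = Some (ea_one A).
Proof.
have [_ [_ [H3 H4]]] := HA.
have [b [Hb _]] := H3 (ea_one A).
have := H4 _ _ (E1 HA Hb) => Eb; by rewrite -Eb.
Qed.

Lemma perp_uniq (A : eaStruct) (HA : is_effect_algebra A) (a y z : A) :
  ea_plus a y = Some (ea_one A) -> ea_plus a z = Some (ea_one A) -> y = z.
Proof.
have [_ [_ [H3 _]]] := HA.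
have [b [Hb U]] := H3 a => Hy Hz.
by rewrite -(U _ Hy) -(U _ Hz).
Qed.

Lemma zero_r (A : eaStruct) (HA : is_effect_algebra A) (x : A) :
  ea_plus x (ea_zero A) = Some x.
Proof.
have [_ [H2 [H3 _]]] := HA.
have [p [Hp _]] := H3 x.
have [t [Ht1 Ht2]] := H2 _ _ _ _ _ (E1 HA Hp) (one_zero HA).
by rewrite Ht1 (perp_uniq HA Ht2 (E1 HA Hp)).
Qed.

Lemma zero_l (A : eaStruct) (HA : is_effect_algebra A) (x : A) :
  ea_plus (ea_zero A) x = Some x.
Proof. apply: (E1 HA). exact: zero_r. Qed.

Definition perp (A : eaStruct) (HA : is_effect_algebra A) (a : A) : A :=
  proj1_sig (constructive_indefinite_description _
    (match HA with conj _ (conj _ (conj H3 _)) =>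
       match H3 a with ex_intro b (conj Hb _) =>
         ex_intro (fun b => ea_plus a b = Some (ea_one A)) b Hb end end)).

Lemma perpP (A : eaStruct) (HA : is_effect_algebra A) (a : A) :
  ea_plus a (perp HA a) = Some (ea_one A).
Proof. rewrite /perp; by case: constructive_indefinite_description. Qed.

Definition val3 (A : eaStruct) (a b c d ap bp : A) (b0 b1 b2 : bool) : A :=
  match b0, b1, b2 with
  | false, false, false => ea_zero A
  | true, false, false => a
  | false, true, false => b
  | false, false, true => d
  | true, true, false => c
  | true, false, true => bp
  | false, true, true => ap
  | true, true, true => ea_one A
  end.

Definition i0 : 'I_3 := @Ordinal 3 0 isT.
Definition i1 : 'I_3 := @Ordinal 3 1 isT.
Definition i2 : 'I_3 := @Ordinal 3 2 isT.

Definition G3fun (A : eaStruct) (a b c d ap bp : A) (S : {set 'I_3}) : A :=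
  val3 a b c d ap bp (i0 \in S) (i1 \in S) (i2 \in S).

Lemma G3hom (A : eaStruct) (HA : is_effect_algebra A) (a b c d ap bp : A)
  (Hab : ea_plus a b = Some c) (Hcd : ea_plus c d = Some (ea_one A))
  (Had : ea_plus a d = Some bp) (Hbd : ea_plus b d = Some ap)
  (Hap : ea_plus a ap = Some (ea_one A)) (Hbp : ea_plus b bp = Some (ea_one A)) :
  @is_ea_hom (boolEA 3) A (G3fun a b c d ap bp).
Proof.
split; first by rewrite /G3fun /= !in_setT.
move=> x y z /=; case: ifP => // Hd [<-].
have D i : ~~ ((i \in x) && (i \in y)).
  by case: (boolP (i \in x)) => //= /(disjointFr Hd) ->.
rewrite /G3fun !in_setU.
move: (D i0) (D i1) (D i2).
case: (i0 \in x); case: (i1 \in x); case: (i2 \in x);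
case: (i0 \in y); case: (i1 \in y); case: (i2 \in y) => //= _ _ _;
rewrite ?zero_r ?zero_l //; by apply: E1.
Qed.

Definition Ga (A : eaStruct) (HA : is_effect_algebra A) (a : A) : ea_hom (boolEA 3) A :=
  EAHom (G3hom HA (perpP HA a) (one_zero HA) (zero_r HA a) (zero_r HA (perp HA a))
     (perpP HA a) (E1 HA (perpP HA a))).

Lemma hom_zero (A : eaStruct) (HA : is_effect_algebra A) n (g : ea_hom (boolEA n) A) :
  g set0 = ea_zero A.
Proof.
have [_ [_ [_ H4]]] := HA.
case: g => g [H1 H2] /=.
have := H2 set0 [set: 'I_n] [set: 'I_n].
rewrite /= disjoints_subset sub0set set0U => /(_ erefl); rewrite H1.
exact: H4.
Qed.

Lemma hom_one (A : eaStruct) n (g : ea_hom (boolEA n) A) :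
  g [set: 'I_n] = ea_one A.
Proof. by case: g => g [H1 H2]. Qed.

Lemma hom_compl (A : eaStruct) (HA : is_effect_algebra A) n (g : ea_hom (boolEA n) A) x :
  g (~: x) = perp HA (g x).
Proof.
apply: (perp_uniq HA _ (perpP HA (g x))).
case: g => g [H1 H2] /=.
have := H2 x (~: x) [set: 'I_n].
by rewrite /= disjoints_subset setCK subxx setUCr => /(_ erefl); rewrite H1.
Qed.

Definition fmap n (x : {set 'I_n}) (S : {set 'I_3}) : {set 'I_n} :=
  [set z | ((i0 \in S) && (z \in x)) || ((i1 \in S) && (z \notin x))].

Lemma fmap_hom n (x : {set 'I_n}) : is_bool_hom (fmap x).
Proof.
rewrite /fmap; split; [|split; [|split; [|split]]].
- by apply/setP => z; rewrite !inE.
- by apply/setP => z; rewrite !inE; case: (z \in x).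
- move=> S T; apply/setP => z; rewrite !inE.
  by case: (i0 \in S); case: (i1 \in S); case: (i0 \in T); case: (i1 \in T); case: (z \in x).
- move=> S T; apply/setP => z; rewrite !inE.
  by case: (i0 \in S); case: (i1 \in S); case: (i0 \in T); case: (i1 \in T); case: (z \in x).
- move=> S; apply/setP => z; rewrite !inE.
  by case: (i0 \in S); case: (i1 \in S); case: (z \in x).
Qed.

Lemma key (A : eaStruct) (HA : is_effect_algebra A) (B : eaStruct)
    (h : forall n : nat, ea_hom (boolEA n) A -> ea_hom (boolEA n) B)
    (Hh : is_cocone h) n (g : ea_hom (boolEA n) A) (x : {set 'I_n}) :
  h n g x = h 3 (Ga HA (g x)) [set i0].
Proof.
have E : fmap x [set i0] = x by apply/setP => z; rewrite !inE eqxx /= orbF.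
rewrite -{1}E.
apply: (Hh 3 n (Ga HA (g x)) g (fmap x) (fmap_hom x)).
move=> S.
have fS : fmap x S = if i0 \in S then (if i1 \in S then [set: 'I_n] else x)
                     else (if i1 \in S then ~: x else set0).
  apply/setP => z; rewrite !inE.
  by case: (i0 \in S); case: (i1 \in S); rewrite ?inE //; case: (z \in x).
rewrite fS /= /G3fun.
case: (i0 \in S); case: (i1 \in S); case: (i2 \in S) => /=;
  by rewrite ?hom_one ?hom_zero ?hom_compl.
Qed.

Theorem mainTheorem1 (A : eaStruct) (HA : is_effect_algebra A)
    (B : eaStruct) (HB : is_effect_algebra B)
    (h : forall n : nat, ea_hom (boolEA n) A -> ea_hom (boolEA n) B)
    (Hh : is_cocone h) :
  exists u : ea_hom A B,
    (forall (n : nat) (g : ea_hom (boolEA n) A) (x : {set 'I_n}),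
        u (g x) = h n g x) /\
    (forall u' : ea_hom A B,
        (forall (n : nat) (g : ea_hom (boolEA n) A) (x : {set 'I_n}),
            u' (g x) = h n g x) ->
        forall a : A, u' a = u a).
Proof.
pose uf (a : A) : B := h 3 (Ga HA a) [set i0].
have Hu n (g : ea_hom (boolEA n) A) x : uf (g x) = h n g x.
  by rewrite (key HA Hh g x).
have GaE (a : A) : Ga HA a [set i0] = a.
  by rewrite /= /G3fun !inE.
have uhom : is_ea_hom uf.
  split.
    rewrite -(hom_one (Ga HA (ea_one A))) Hu; exact: hom_one.
  move=> a b c Hab.
  have [_ [H2 _]] := HA.
  have [t [Hbt Hat]] := H2 _ _ _ _ _ Hab (perpP HA c).
  have [s [Has Hbs]] := H2 _ _ _ _ _ (E1 HA Hab) (perpP HA c).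
  pose G := EAHom (G3hom HA Hab (perpP HA c) Has Hbt Hat Hbs).
  have Ga0 : G [set i0] = a by rewrite /= /G3fun !inE.
  have Ga1 : G [set i1] = b by rewrite /= /G3fun !inE.
  have Ga01 : G [set i0; i1] = c by rewrite /= /G3fun !inE.
  rewrite -Ga0 -Ga1 -Ga01 !Hu.
  case: (h 3 G) => hg [_ Hg2] /=.
  apply: Hg2 => /=.
  have -> : [disjoint [set i0] & [set i1]].
    by rewrite disjoints_subset sub1set !inE.
  by [].
exists (EAHom uhom); split => //.
move=> u' Hu' a.
by rewrite /= -{1}(GaE a) Hu'.
Qed.
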